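(* Let $S$ be a $\Gamma$-hemiring. If $\mu$ is a prime fuzzy h-ideal of $S$ and $x\in S$ with $x\notin\mu_0$, then $\langle x,\mu\rangle=\mu$. Conversely, let $\mu$ be a fuzzy h-ideal of $S$ with $\operatorname{Im}\mu=\{1,t\}$ for some $t\in[0,1)$; if $\langle x,\mu\rangle=\mu$ for every $x\in S$ with $\mu(x)=t$, then $\mu$ is a prime fuzzy h-ideal of $S$.
   Context: A $\Gamma$-hemiring is a pair of additive commutative semigroups with zero $S$ and $\Gamma$ with a map $S\times\Gamma\times S\to S$, $(a,\alpha,b)\mapsto a\alpha b$, such that for all $a,b,c\in S$, $\alpha,\beta\in\Gamma$: $(a+b)\alpha c=a\alpha c+b\alpha c$; $a\alpha(b+c)=a\alpha b+a\alpha c$; $a(\alpha+\beta)b=a\alpha b+a\beta b$; $a\alpha(b\beta c)=(a\alpha b)\beta c$; $0\alpha a=0=a\alpha0$; $a0b=0=b0a$. A fuzzy h-ideal of $S$ is a map $\mu:S\to[0,1]$, not identically $0$, such that for all $x,y,a,b,z\in S$, $\gamma\in\Gamma$: $\mu(x+y)\ge\min\{\mu(x),\mu(y)\}$; $\mu(x\gamma y)\ge\mu(x)$ and $\mu(x\gamma y)\ge\mu(y)$; $x+a+z=b+z$ implies $\mu(x)\ge\min\{\mu(a),\mu(b)\}$. For fuzzy subsets $\sigma,\theta$, the h-product is $(\sigma\Gamma_h\theta)(x)=\sup\min\{\sigma(a_1),\sigma(a_2),\theta(b_1),\theta(b_2)\}$, the supremum over all $z,a_1,a_2,b_1,b_2\in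 S$, $\gamma,\delta\in\Gamma$ with $x+a_1\gamma b_1+z=a_2\delta b_2+z$, and $0$ if no such expression exists. Inclusion means pointwise $\le$. A fuzzy h-ideal $\mu$ is prime if it is not constant and for any fuzzy h-ideals $\sigma,\theta$, $\sigma\Gamma_h\theta\subseteq\mu$ implies $\sigma\subseteq\mu$ or $\theta\subseteq\mu$. $\mu_0=\{x\in S:\mu(x)=\mu(0)\}$; $\operatorname{Im}\mu$ is the image of $\mu$. The extension of $\mu$ by $x$ is $\langle x,\mu\rangle(y)=\inf_{s\in S,\ \alpha,\gamma\in\Gamma}\mu(x\alpha s\gamma y)$. *)

(* Defs.v *)
From HB Require Import structures.
From mathcomp Require Import all_boot all_order all_algebra.
From mathcomp Require Import boolp classical_sets reals.
Set Implicit Arguments. Unset Strict Implicit. Unset Printing Implicit Defensive.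
Import Order.TTheory GRing.Theory Num.Theory.
Local Open Scope classical_set_scope.
Local Open Scope ring_scope.

Record GammaHemiring := {
  carS : Type;
  carG : Type;
  addS : carS -> carS -> carS;
  zeroS : carS;
  addG : carG -> carG -> carG;
  zeroG : carG;
  tmul : carS -> carG -> carS -> carS;
  addSA : forall a b c, addS a (addS b c) = addS (addS a b) c;
  addSC : forall a b, addS a b = addS b a;
  add0S : forall a, addS zeroS a = a;
  addGA : forall a b c, addG a (addG b c) = addG (addG a b) c;
  addGC : forall a b, addG a b = addG b a;
  add0G : forall a, addG zeroG a = a;
  tmulDl : forall a b c (al : carG), tmul (addS a b) al c = addS (tmul a al c) (tmul b al c);
  tmulDr : forall a b c (al : carG), tmul a al (addS b c) = addS (tmul a al b) (tmul a al c);
  tmulDm : forall a b (al be : carG), tmul a (addG al be) b = addS (tmul a al b) (tmul a be b);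
  tmulA : forall a b c (al be : carG), tmul a al (tmul b be c) = tmul (tmul a al b) be c;
  tmul0l : forall a (al : carG), tmul zeroS al a = zeroS;
  tmul0r : forall a (al : carG), tmul a al zeroS = zeroS;
  tmul0m : forall a b, tmul a zeroG b = zeroS /\ tmul b zeroG a = zeroS
}.

Section Fuzzy.
Variables (R : realType) (H : GammaHemiring).
Local Notation S := (carS H).
Local Notation Gm := (carG H).
Local Notation sadd := (@addS H).
Local Notation mul := (@tmul H).

Definition fuzzy_subset (mu : S -> R) : Prop := forall x, 0 <= mu x <= 1.

Definition fuzzy_h_ideal (mu : S -> R) : Prop :=
  [/\ fuzzy_subset mu,
      exists x, mu x <> 0,
      forall x y, Num.min (mu x) (mu y) <= mu (sadd x y),
      forall x y (g : Gm), mu x <= mu (mul x g y) /\ mu y <= mu (mul x g y)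
    & forall x a b z, sadd (sadd x a) z = sadd b z -> Num.min (mu a) (mu b) <= mu x].

Definition hprod_vals (sigma theta : S -> R) (x : S) : set R :=
  [set r | exists z a1 a2 b1 b2 (g d : Gm),
       sadd (sadd x (mul a1 g b1)) z = sadd (mul a2 d b2) z /\
       r = Num.min (Num.min (sigma a1) (sigma a2)) (Num.min (theta b1) (theta b2))].

Definition hprod (sigma theta : S -> R) (x : S) : R :=
  if `[< hprod_vals sigma theta x !=set0 >] then sup (hprod_vals sigma theta x) else 0.

Definition fsub (sigma mu : S -> R) : Prop := forall x, sigma x <= mu x.

Definition prime_fuzzy_h_ideal (mu : S -> R) : Prop :=
  [/\ fuzzy_h_ideal mu,
      ~ (exists c, forall x, mu x = c)
    & forall sigma theta, fuzzy_h_ideal sigma -> fuzzy_h_ideal theta ->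
        fsub (hprod sigma theta) mu -> fsub sigma mu \/ fsub theta mu].

Definition fext (x : S) (mu : S -> R) : S -> R :=
  fun y => inf [set r | exists s (al ga : Gm), r = mu (mul (mul x al s) ga y)].
End Fuzzy.

(* Main.v *)
Require Import Defs.
From HB Require Import structures.
From mathcomp Require Import all_boot all_order all_algebra.
From mathcomp Require Import boolp classical_sets reals.
From mathcomp Require Import lra.
From Stdlib Require Classical.
Set Implicit Arguments. Unset Strict Implicit. Unset Printing Implicit Defensive.
Import Order.TTheory GRing.Theory Num.Theory.
Local Open Scope classical_set_scope.
Local Open Scope ring_scope.

Section Proofs.
Variables (R : realType) (H : GammaHemiring).
Local Notation S := (carS H).
Local Notation Gm := (carG H).
Local Notation sadd := (@addS H).
Local Notation mul := (@tmul H).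
Local Notation z0 := (@zeroS H).

Lemma hid_le0 (mu : S -> R) : fuzzy_h_ideal mu -> forall y, mu y <= mu z0.
Proof.
case=> _ _ _ Hm _ y; have := (Hm z0 y (@zeroG H)).2; by rewrite tmul0l.
Qed.

Lemma hid_0gt (mu : S -> R) : fuzzy_h_ideal mu -> 0 < mu z0 <= 1.
Proof.
move=> Hmu; have Hle := hid_le0 Hmu; case: Hmu => Hf [x0 Hx0] _ _ _.
have /andP[h1 _] := Hf x0; have /andP[_ h2] := Hf z0; rewrite h2 andbT.
apply: (lt_le_trans _ (Hle x0)); rewrite lt_neqAle h1 andbT eq_sym; exact/eqP.
Qed.

Lemma min4l (a b c d : R) : Num.min (Num.min a b) (Num.min c d) <= Num.min a c.
Proof. rewrite le_min !ge_min !lexx /=. by rewrite !orbT. Qed.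
Lemma min4r (a b c d : R) : Num.min (Num.min a b) (Num.min c d) <= Num.min b d.
Proof. rewrite le_min !ge_min !lexx /=. by rewrite !orbT. Qed.

Definition ind (P : S -> Prop) (c : R) : S -> R := fun a => if `[< P a >] then c else 0.

Lemma ind_ideal (P : S -> Prop) c : 0 < c <= 1 -> P z0 ->
  (forall a b, P a -> P b -> P (sadd a b)) ->
  (forall a b g, P a -> P (mul a g b)) ->
  (forall a b g, P b -> P (mul a g b)) ->
  (forall x a b z, sadd (sadd x a) z = sadd b z -> P a -> P b -> P x) ->
  fuzzy_h_ideal (ind P c).
Proof.
move=> /andP[c0 c1] P0 PD PMl PMr Ph; rewrite /ind; split.
- by move=> x; case: asboolP => _; rewrite ?lexx ?ler01 ?(ltW c0) ?c1.
- by exists z0; rewrite asboolT //; apply/eqP; rewrite gt_eqF.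
- move=> x y; case: asboolP => Px; case: asboolP => Py; case: asboolP => Pxy //;
    rewrite ?minxx ?ge_min ?lexx ?(ltW c0) ?orbT //.
  by exfalso; apply: Pxy; apply: PD.
- move=> x y g; split; case: asboolP => Px; case: asboolP => Pxy;
    rewrite ?lexx ?(ltW c0) //; exfalso; apply: Pxy; [exact: PMl|exact: PMr].
- move=> x a b z E; case: asboolP => Pa; case: asboolP => Pb; case: asboolP => Px;
    rewrite ?minxx ?ge_min ?lexx ?(ltW c0) ?orbT //.
  by exfalso; apply: Px; apply: Ph E Pa Pb.
Qed.

Lemma hprod_sub (mu sg th : S -> R) : fuzzy_h_ideal mu ->
  (forall a g b, Num.min (sg a) (th b) <= mu (mul a g b)) -> fsub (hprod sg th) mu.
Proof.
move=> Hmu HB w; have [Hf _ _ _ Hh] := Hmu; rewrite /hprod; case: asboolP => ne; last first.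
  by have /andP[] := Hf w.
apply: ge_sup => // r [z [a1 [a2 [b1 [b2 [g [d [Heq ->]]]]]]]].
apply: le_trans (Hh _ _ _ _ Heq); rewrite le_min; apply/andP; split.
- by apply: le_trans (HB a1 g b1); apply: min4l.
- by apply: le_trans (HB a2 d b2); apply: min4r.
Qed.

Definition fset (x : S) (mu : S -> R) (y : S) : set R :=
  [set r | exists s (al ga : Gm), r = mu (mul (mul x al s) ga y)].

Lemma fset_ne x (mu : S -> R) y : fset x mu y !=set0.
Proof.
by exists (mu (mul (mul x (@zeroG H) z0) (@zeroG H) y)); exists z0, (@zeroG H), (@zeroG H).
Qed.

Lemma fset_lb x (mu : S -> R) y : fuzzy_h_ideal mu -> has_lbound (fset x mu y).
Proof.
case=> Hf _ _ _ _; exists 0 => r [s [al [ga ->]]]; by have /andP[] := Hf (mul (mul x al s) ga y).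
Qed.

Lemma fext_el x (mu : S -> R) y s al ga : fuzzy_h_ideal mu ->
  fext x mu y <= mu (mul (mul x al s) ga y).
Proof. by move=> Hmu; apply: (ge_inf (fset_lb x y Hmu)); exists s, al, ga. Qed.

Lemma fext_ge x (mu : S -> R) y : fuzzy_h_ideal mu -> mu y <= fext x mu y.
Proof.
move=> Hmu; have [_ _ _ Hm _] := Hmu; apply: lb_le_inf; first exact: fset_ne.
by move=> r [s [al [ga ->]]]; exact: (Hm _ y ga).2.
Qed.

Lemma fext_ideal x (mu : S -> R) : fuzzy_h_ideal mu -> fuzzy_h_ideal (fext x mu).
Proof.
move=> Hmu; have [Hf [x0 Hx0] Ha Hm Hh] := Hmu; split.
- move=> y; apply/andP; split.
    apply: lb_le_inf; first exact: fset_ne.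
    by move=> r [s [al [ga ->]]]; have /andP[] := Hf (mul (mul x al s) ga y).
  apply: le_trans; first exact: (@fext_el x mu y z0 (@zeroG H) (@zeroG H) Hmu).
  by have /andP[] := Hf (mul (mul x (@zeroG H) z0) (@zeroG H) y).
- exists x0; have /andP[h0 _] := Hf x0; have h1 := @fext_ge x mu x0 Hmu.
  move=> E; apply: Hx0; apply/eqP; rewrite eq_le h0 andbT; by rewrite -E.
- move=> y1 y2; apply: lb_le_inf; first exact: fset_ne.
  move=> r [s [al [ga ->]]]; rewrite tmulDr; apply: le_trans (Ha _ _).
  rewrite le_min !ge_min !fext_el //= !orbT //.
- move=> y w g; split; (apply: lb_le_inf; first exact: fset_ne);
    move=> r [s [al [ga ->]]]; rewrite tmulA.
    by apply: le_trans (Hm _ w g).1; apply: fext_el.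
  have -> : mul (mul x al s) ga y = mul x al (mul s ga y) by rewrite tmulA.
  exact: fext_el.
- move=> y a b z E; apply: lb_le_inf; first exact: fset_ne.
  move=> r [s [al [ga ->]]].
  have E' := congr1 (mul (mul x al s) ga) E; rewrite !tmulDr in E'.
  apply: le_trans (Hh _ _ _ _ E').
  rewrite le_min !ge_min !fext_el //= !orbT //.
Qed.

Definition Pset (mu nu : S -> R) (a : S) : Prop := forall g b, nu b <= mu (mul a g b).

Lemma Pset_ideal (mu nu : S -> R) c : fuzzy_h_ideal mu -> 0 < c <= 1 ->
  (forall b, nu b <= mu z0) -> (forall d g b, nu b <= nu (mul d g b)) ->
  fuzzy_h_ideal (ind (Pset mu nu) c).
Proof.
move=> Hmu c01 nu0 nuM; have [_ _ Ha Hm Hh] := Hmu; apply: ind_ideal => //.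
- by move=> g b; rewrite tmul0l.
- move=> a1 a2 P1 P2 g b; rewrite tmulDl; apply: le_trans (Ha _ _).
  by rewrite le_min P1 P2.
- move=> a d g' P g b; rewrite -tmulA; apply: le_trans (P g' _); exact: nuM.
- move=> d a g' P g b; rewrite -tmulA; apply: le_trans (P g b) _; exact: (Hm _ _ _).2.
- move=> y a b z E Pa Pb g w.
  have E' := congr1 (fun u => mul u g w) E; rewrite /= !tmulDl in E'.
  by apply: le_trans (Hh _ _ _ _ E'); rewrite le_min Pa Pb.
Qed.

Lemma semiprime (mu : S -> R) a : prime_fuzzy_h_ideal mu ->
  (forall g c, mu z0 <= mu (mul a g c)) -> mu z0 <= mu a.
Proof.
case=> Hmu _ Hp Ha.
have Ht : fuzzy_h_ideal (ind (Pset mu (fun=> mu z0)) (mu z0)).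
  by apply: Pset_ideal => //; try exact: hid_0gt.
have Hs : fsub (hprod (ind (Pset mu (fun=> mu z0)) (mu z0)) (ind (Pset mu (fun=> mu z0)) (mu z0))) mu.
  apply: hprod_sub => // a' g b; rewrite /ind; case: asboolP => Da.
    by rewrite ge_min (Da g b).
  rewrite ge_min; have [Hf _ _ _ _] := Hmu; by have /andP[-> _] := Hf (mul a' g b).
by case: (Hp _ _ Ht Ht Hs) => /(_ a); rewrite /ind asboolT.
Qed.
End Proofs.
Theorem theorem3p21 (R : realType) (H : GammaHemiring) :
  (forall mu : carS H -> R, prime_fuzzy_h_ideal mu ->
     forall x : carS H, mu x <> mu (@zeroS H) -> fext x mu = mu) /\
  (forall (mu : carS H -> R) (t : R), fuzzy_h_ideal mu ->
     0 <= t < 1 -> range mu = [set 1; t] ->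
     (forall x : carS H, mu x = t -> fext x mu = mu) ->
     prime_fuzzy_h_ideal mu).
Proof.
split.
- move=> mu Hp x hx.
  have Hp' := Hp; case: Hp' => Hmu _ Hpr.
  have Hth := fext_ideal x Hmu.
  have Hs : fuzzy_h_ideal (ind (Pset mu (fext x mu)) (mu (@zeroS H))).
    apply: Pset_ideal => //; first exact: hid_0gt.
      move=> b; apply: le_trans (hid_le0 Hmu _).
      exact: (@fext_el _ _ x mu b (@zeroS H) (@zeroG H) (@zeroG H) Hmu).
    by move=> d g b; case: Hth => _ _ _ /(_ d b g) [].
  have Hsub : fsub (hprod (ind (Pset mu (fext x mu)) (mu (@zeroS H))) (fext x mu)) mu.
    apply: hprod_sub => // a g b; rewrite /ind; case: asboolP => Pa.
      by rewrite ge_min (Pa g b) orbT.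
    rewrite ge_min; have [Hf _ _ _ _] := Hmu; by have /andP[-> _] := Hf (tmul a g b).
  case: (Hpr _ _ Hs Hth Hsub) => Hc.
    exfalso; apply: hx; apply/eqP; rewrite eq_le hid_le0 //=; apply: semiprime => // g c.
    have := Hc (tmul x g c); rewrite /ind asboolT //.
    by move=> al b; exact: fext_el.
  by apply: funext => y; apply/eqP; rewrite eq_le Hc fext_ge.
- move=> mu t Hmu /andP[t0 t1] Hr Hext.
  have Hrng : forall a, mu a = 1 \/ mu a = t.
    move=> a; have : [set 1; t] (mu a) by rewrite -Hr; exists a.
    by case; [left|right].
  split => //.
    case=> c Hc; have : range mu 1 by rewrite Hr; left.
    case=> a1 _ e1; have : range mu t by rewrite Hr; right.
    case=> a2 _ e2; move: t1; by rewrite -e2 Hc -(Hc a1) e1 ltxx.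
  move=> sg th Hs Ht Hsub.
  case: (pselect (fsub sg mu)) => [|ns]; [by left | right].
  case: (pselect (fsub th mu)) => [//|nt]; exfalso.
  have [a /negP] := Classical_Pred_Type.not_all_ex_not _ _ ns; rewrite -ltNge => Ha.
  have [b /negP] := Classical_Pred_Type.not_all_ex_not _ _ nt; rewrite -ltNge => Hb.
  have [Hfs _ _ Hms _] := Hs; have [Hft _ _ _ _] := Ht.
  have mua : mu a = t.
    case: (Hrng a) => // e; move: Ha; rewrite e => h; have /andP[_ h'] := Hfs a.
    by move: (lt_le_trans h h'); rewrite ltxx.
  have mub : mu b = t.
    case: (Hrng b) => // e; move: Hb; rewrite e => h; have /andP[_ h'] := Hft b.
    by move: (lt_le_trans h h'); rewrite ltxx.
  have Eb : fext a mu b = t by rewrite (Hext a mua) mub.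
  have [s [al [ga hw]]] : exists s al ga, mu (tmul (tmul a al s) ga b) = t.
    apply: Classical_Prop.NNPP => nE.
    have : 1 <= fext a mu b.
      apply: lb_le_inf; first exact: fset_ne.
      move=> r [s [al [ga ->]]]; case: (Hrng (tmul (tmul a al s) ga b)) => [->//|e].
      by exfalso; apply: nE; exists s, al, ga.
    by rewrite Eb leNgt t1.
  have := Hsub (tmul (tmul a al s) ga b); rewrite hw /hprod.
  have Hin : hprod_vals sg th (tmul (tmul a al s) ga b)
     (Num.min (Num.min (sg (@zeroS H)) (sg (tmul a al s))) (Num.min (th b) (th b))).
    exists (@zeroS H), (@zeroS H), (tmul a al s), b, b, ga, ga; split => //.
    by rewrite tmul0l; congr (addS _ _); rewrite addSC add0S.
  rewrite asboolT; last by eexists; exact: Hin.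
  have Hub : has_ubound (hprod_vals sg th (tmul (tmul a al s) ga b)).
    exists 1 => r' [z' [a1 [a2 [b1 [b2 [g [d [_ ->]]]]]]]].
    by have /andP[_ hh] := Hfs a1; rewrite !ge_min hh.
  have Hr1 := ub_le_sup Hub Hin.
  have rt : t < Num.min (Num.min (sg (@zeroS H)) (sg (tmul a al s))) (Num.min (th b) (th b)).
    have tb : t < th b by rewrite -mub.
    have ta : t < sg a by rewrite -mua.
    rewrite !lt_min tb (lt_le_trans ta (hid_le0 Hs a)) /=.
    by rewrite (lt_le_trans ta (Hms a s al).1).
  by move=> h; have := lt_le_trans rt (le_trans Hr1 h); rewrite ltxx.
Qed.
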